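(* Let $k\ge1$. The logic $\mathbb{L}_k^{\le}$ is finitely equivalential, with set of equivalence formulas $E(p,q)=\{\delta(p,q)\}$, and hence protoalgebraic; but $\mathbb{L}_k^{\le}$ is not algebraizable in the sense of Blok and Pigozzi.
   Context: A modal pseudocomplemented De Morgan algebra ($mpM$-algebra) is an algebra $\langle A,\wedge,\vee,\sim,{}^\ast,0,1\rangle$ such that $\langle A,\wedge,\vee,\sim,0,1\rangle$ is a De Morgan algebra (bounded distributive lattice with $\sim\sim x=x$, $\sim(x\vee y)=\sim x\wedge\sim y$), $x^\ast$ is the pseudocomplement of $x$, and $x\vee\sim x\le x\vee x^\ast$. A $\mathcal{C}_k$-algebra ($k\ge1$) is a pair $(A,t)$ with $A$ an $mpM$-algebra and $t$ an $mpM$-automorphism of $A$ with $t^k=\mathrm{id}$. $Fm$ is the set of formulas built from a denumerable set of variables with connectives $\wedge,\vee$ (binary), $\sim,{}^\ast,t$ (unary), $\top,\bot$ (constants); a valuation into $(A,t)$ is a homomorphism $v:Fm\to(A,t)$ (with $v(\top)=1$, $v(\bot)=0$). The degree-preserving logic $\mathbb{L}_k^{\le}=\langle Fm,\models_k^{\le}\rangle$: for nonempty finite $\{\alpha_1,\dots,\alpha_n\}$, $\alpha_1,\dots,\alpha_n\models_k^{\le}\alpha$ iff for every $\mathcal{C}_k$-algebra $(A,t)$, every valuation $v$ and every $a\in A$, if $v(\alpha_i)\ge a$ for all $i$ then $v(\alpha)\ge a$; $\emptyset\models_k^{\le}\alpha$ iff $v(\alpha)=1$ for all $(A,t)$ and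 $v$; for infinite $\Gamma$, $\Gamma\models_k^{\le}\alpha$ iff some finite nonempty subset entails $\alpha$. Define $x\to y=\sim\big((\sim(x\vee y))^\ast\wedge(x\vee y)\big)\vee\big((\sim(x\wedge y))^\ast\wedge(x\wedge y)\big)$, $x\leftrightarrow y=(x\to y)\wedge(\sim y\to\sim x)$, and $\delta(p,q)=\bigwedge_{i=0}^{k-1}(t^ip\leftrightarrow t^iq)$. A logic $L$ is finitely equivalential if there is a finite set $E(p,q)$ of formulas in two variables with: (E1) $\vdash_L\varepsilon(p,p)$ for all $\varepsilon\in E$; (E2) $E(p,q)\cup\{p\}\vdash_L q$; (E3) for every $n$-ary connective $\#$, $E(p_1,q_1)\cup\dots\cup E(p_n,q_n)\vdash_L E(\#(p_1,\dots,p_n),\#(q_1,\dots,q_n))$. $L$ is protoalgebraic if for every algebra $\mathbf A$ the Leibniz operator $F\mapsto\boldsymbol\Omega_{\mathbf A}F$ (largest congruence compatible with $F$) is monotone on $L$-filters of $\mathbf A$. $L$ is algebraizable (Blok–Pigozzi) if there are a set of equivalence formulas $\Delta(p,q)$ and defining equations $E(p)$ satisfying the standard conditions, equivalently the Leibniz operator is a lattice isomorphism between $L$-filters and relative congruences on every algebra. *)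

(* Defs.v *)
From Stdlib Require Import List.
Import ListNotations.

Inductive Fm : Type :=
| Var : nat -> Fm
| And : Fm -> Fm -> Fm
| Or : Fm -> Fm -> Fm
| Neg : Fm -> Fm
| Star : Fm -> Fm
| Tc : Fm -> Fm
| Top : Fm
| Bot : Fm.

Fixpoint subst (s : nat -> Fm) (f : Fm) : Fm :=
  match f with
  | Var n => s n
  | And a b => And (subst s a) (subst s b)
  | Or a b => Or (subst s a) (subst s b)
  | Neg a => Neg (subst s a)
  | Star a => Star (subst s a)
  | Tc a => Tc (subst s a)
  | Top => Top
  | Bot => Bot
  end.

Fixpoint vars_in (P : nat -> Prop) (f : Fm) : Prop :=
  match f with
  | Var n => P n
  | And a b | Or a b => vars_in P a /\ vars_in P b
  | Neg a | Star a | Tc a => vars_in P a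
  | Top | Bot => True
  end.

(** substitution p := phi, q := psi, where p = Var 0, q = Var 1 *)
Definition sub2 (phi psi : Fm) (n : nat) : Fm :=
  match n with 0 => phi | 1 => psi | _ => Var n end.

Record sigalg : Type := SigAlg {
  car : Type;
  s_and : car -> car -> car;
  s_or : car -> car -> car;
  s_neg : car -> car;
  s_star : car -> car;
  s_t : car -> car;
  s_top : car;
  s_bot : car }.

Fixpoint eval (A : sigalg) (v : nat -> car A) (f : Fm) : car A :=
  match f with
  | Var n => v n
  | And a b => s_and A (eval A v a) (eval A v b)
  | Or a b => s_or A (eval A v a) (eval A v b)
  | Neg a => s_neg A (eval A v a)
  | Star a => s_star A (eval A v a)
  | Tc a => s_t A (eval A v a)
  | Top => s_top A
  | Bot => s_bot A
  end.

Definition le (A : sigalg) (x y : car A) : Prop := s_and A x y = x.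

Record Ck_alg (k : nat) : Type := CkAlg {
  ck :> sigalg;
  and_assoc : forall x y z : car ck, s_and ck x (s_and ck y z) = s_and ck (s_and ck x y) z;
  or_assoc : forall x y z : car ck, s_or ck x (s_or ck y z) = s_or ck (s_or ck x y) z;
  and_comm : forall x y : car ck, s_and ck x y = s_and ck y x;
  or_comm : forall x y : car ck, s_or ck x y = s_or ck y x;
  and_absorb : forall x y : car ck, s_and ck x (s_or ck x y) = x;
  or_absorb : forall x y : car ck, s_or ck x (s_and ck x y) = x;
  and_distr : forall x y z : car ck,
      s_and ck x (s_or ck y z) = s_or ck (s_and ck x y) (s_and ck x z);
  or_bot : forall x : car ck, s_or ck x (s_bot ck) = x;
  and_top : forall x : car ck, s_and ck x (s_top ck) = x;
  neg_invol : forall x : car ck, s_neg ck (s_neg ck x) = x;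
  neg_or : forall x y : car ck, s_neg ck (s_or ck x y) = s_and ck (s_neg ck x) (s_neg ck y);
  star_pc : forall x y : car ck, s_and ck x y = s_bot ck <-> le ck y (s_star ck x);
  mpM_ax : forall x : car ck,
      le ck (s_or ck x (s_neg ck x)) (s_or ck x (s_star ck x));
  t_and : forall x y : car ck, s_t ck (s_and ck x y) = s_and ck (s_t ck x) (s_t ck y);
  t_or : forall x y : car ck, s_t ck (s_or ck x y) = s_or ck (s_t ck x) (s_t ck y);
  t_neg : forall x : car ck, s_t ck (s_neg ck x) = s_neg ck (s_t ck x);
  t_star : forall x : car ck, s_t ck (s_star ck x) = s_star ck (s_t ck x);
  t_top : s_t ck (s_top ck) = s_top ck;
  t_bot : s_t ck (s_bot ck) = s_bot ck;
  t_inj : forall x y : car ck, s_t ck x = s_t ck y -> x = y;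
  t_surj : forall y : car ck, exists x, s_t ck x = y;
  t_period : forall x : car ck, Nat.iter k (s_t ck) x = x }.

Definition logic := (Fm -> Prop) -> Fm -> Prop.

Definition ck_entails (k : nat) (l : list Fm) (a : Fm) : Prop :=
  forall (A : Ck_alg k) (v : nat -> car A) (x : car A),
    (forall b, In b l -> le A x (eval A v b)) -> le A x (eval A v a).

Definition ck_valid (k : nat) (a : Fm) : Prop :=
  forall (A : Ck_alg k) (v : nat -> car A), eval A v a = s_top A.

Definition Lk (k : nat) : logic := fun G a =>
  ((forall b, ~ G b) /\ ck_valid k a) \/
  (exists l : list Fm, l <> [] /\ (forall b, In b l -> G b) /\ ck_entails k l a).

Definition imp (x y : Fm) : Fm :=
  Or (Neg (And (Star (Neg (Or x y))) (Or x y)))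
     (And (Star (Neg (And x y))) (And x y)).
Definition iff (x y : Fm) : Fm := And (imp x y) (imp (Neg y) (Neg x)).

Definition tpow (i : nat) (x : Fm) : Fm := Nat.iter i Tc x.

Fixpoint delta_upto (m : nat) (p q : Fm) : Fm :=
  match m with
  | 0 => iff (tpow 0 p) (tpow 0 q)
  | S m' => And (delta_upto m' p q) (iff (tpow m p) (tpow m q))
  end.

Definition delta (k : nat) : Fm := delta_upto (k - 1) (Var 0) (Var 1).

Definition no_prem : Fm -> Prop := fun _ => False.

Definition cons_all (L : logic) (G D : Fm -> Prop) : Prop :=
  forall a, D a -> L G a.

Definition inst2 (D : Fm -> Prop) (phi psi : Fm) : Fm -> Prop :=
  fun c => exists d, D d /\ c = subst (sub2 phi psi) d.

Definition union (X Y : Fm -> Prop) : Fm -> Prop := fun a => X a \/ Y a.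

Definition two_var (D : Fm -> Prop) : Prop :=
  forall d, D d -> vars_in (fun n => n = 0 \/ n = 1) d.

Definition equivalence_set (L : logic) (E : Fm -> Prop) : Prop :=
  two_var E /\
  cons_all L no_prem (inst2 E (Var 0) (Var 0)) /\
  L (union (inst2 E (Var 0) (Var 1)) (fun b => b = Var 0)) (Var 1) /\
  cons_all L (union (inst2 E (Var 0) (Var 1)) (inst2 E (Var 2) (Var 3)))
    (inst2 E (And (Var 0) (Var 2)) (And (Var 1) (Var 3))) /\
  cons_all L (union (inst2 E (Var 0) (Var 1)) (inst2 E (Var 2) (Var 3)))
    (inst2 E (Or (Var 0) (Var 2)) (Or (Var 1) (Var 3))) /\
  cons_all L (inst2 E (Var 0) (Var 1)) (inst2 E (Neg (Var 0)) (Neg (Var 1))) /\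
  cons_all L (inst2 E (Var 0) (Var 1)) (inst2 E (Star (Var 0)) (Star (Var 1))) /\
  cons_all L (inst2 E (Var 0) (Var 1)) (inst2 E (Tc (Var 0)) (Tc (Var 1))) /\
  cons_all L no_prem (inst2 E Top Top) /\
  cons_all L no_prem (inst2 E Bot Bot).

Definition finitely_equivalential (L : logic) : Prop :=
  exists E : list Fm, equivalence_set L (fun a => In a E).

Definition is_filter (L : logic) (A : sigalg) (F : car A -> Prop) : Prop :=
  forall G a, L G a -> forall v : nat -> car A,
    (forall b, G b -> F (eval A v b)) -> F (eval A v a).

Definition congruence (A : sigalg) (th : car A -> car A -> Prop) : Prop :=
  (forall x, th x x) /\ (forall x y, th x y -> th y x) /\
  (forall x y z, th x y -> th y z -> th x z) /\
  (forall x x' y y', th x x' -> th y y' -> th (s_and A x y) (s_and A x' y')) /\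
  (forall x x' y y', th x x' -> th y y' -> th (s_or A x y) (s_or A x' y')) /\
  (forall x x', th x x' -> th (s_neg A x) (s_neg A x')) /\
  (forall x x', th x x' -> th (s_star A x) (s_star A x')) /\
  (forall x x', th x x' -> th (s_t A x) (s_t A x')).

Definition compatible (A : sigalg) (th : car A -> car A -> Prop) (F : car A -> Prop) :=
  forall x y, th x y -> F x -> F y.

(** Leibniz congruence: the largest congruence compatible with F, i.e. the
    union of all congruences compatible with F *)
Definition leibniz (A : sigalg) (F : car A -> Prop) (x y : car A) : Prop :=
  exists th, congruence A th /\ compatible A th F /\ th x y.

Definition protoalgebraic (L : logic) : Prop :=
  forall (A : sigalg) (F G : car A -> Prop),
    is_filter L A F -> is_filter L A G -> (forall x, F x -> G x) ->
    forall x y, leibniz A F x y -> leibniz A G x y.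

(** Blok–Pigozzi algebraizability (syntactic characterization, BP Thm 4.7):
    a set Delta(p,q) of formulas and a set E(p) of equations such that
    (R) |- Delta(p,p); (Sym) Delta(p,q) |- Delta(q,p);
    (Trans) Delta(p,q) u Delta(q,r) |- Delta(p,r); (Rep) for each connective;
    (ALG4) p -||- Delta(E(p)). *)
Definition algebraizable (L : logic) : Prop :=
  exists (D : Fm -> Prop) (E : Fm * Fm -> Prop),
    two_var D /\
    (forall e, E e -> vars_in (fun n => n = 0) (fst e) /\ vars_in (fun n => n = 0) (snd e)) /\
    cons_all L no_prem (inst2 D (Var 0) (Var 0)) /\
    cons_all L (inst2 D (Var 0) (Var 1)) (inst2 D (Var 1) (Var 0)) /\
    cons_all L (union (inst2 D (Var 0) (Var 1)) (inst2 D (Var 1) (Var 2)))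
      (inst2 D (Var 0) (Var 2)) /\
    cons_all L (union (inst2 D (Var 0) (Var 1)) (inst2 D (Var 2) (Var 3)))
      (inst2 D (And (Var 0) (Var 2)) (And (Var 1) (Var 3))) /\
    cons_all L (union (inst2 D (Var 0) (Var 1)) (inst2 D (Var 2) (Var 3)))
      (inst2 D (Or (Var 0) (Var 2)) (Or (Var 1) (Var 3))) /\
    cons_all L (inst2 D (Var 0) (Var 1)) (inst2 D (Neg (Var 0)) (Neg (Var 1))) /\
    cons_all L (inst2 D (Var 0) (Var 1)) (inst2 D (Star (Var 0)) (Star (Var 1))) /\
    cons_all L (inst2 D (Var 0) (Var 1)) (inst2 D (Tc (Var 0)) (Tc (Var 1))) /\
    cons_all L no_prem (inst2 D Top Top) /\
    cons_all L no_prem (inst2 D Bot Bot) /\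
    (let DE := fun c => exists e d, E e /\ D d /\ c = subst (sub2 (fst e) (snd e)) d in
     cons_all L (fun b => b = Var 0) DE /\ L DE (Var 0)).

(* Main.v *)
Require Import Defs.
From Stdlib Require Import List Lia PeanoNat.
Import ListNotations.


Arguments ck {k} _.
Arguments and_assoc {k} _.
Arguments or_assoc {k} _.
Arguments and_comm {k} _.
Arguments or_comm {k} _.
Arguments and_absorb {k} _.
Arguments or_absorb {k} _.
Arguments and_distr {k} _.
Arguments or_bot {k} _.
Arguments and_top {k} _.
Arguments neg_invol {k} _.
Arguments neg_or {k} _.
Arguments star_pc {k} _.
Arguments mpM_ax {k} _.
Arguments t_and {k} _.
Arguments t_or {k} _.
Arguments t_neg {k} _.
Arguments t_star {k} _.
Arguments t_top {k} _.
Arguments t_bot {k} _.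
Arguments t_inj {k} _.
Arguments t_surj {k} _.
Arguments t_period {k} _.

Notation "x ⊓ y" := (s_and _ x y) (at level 40, left associativity).
Notation "x ⊔ y" := (s_or _ x y) (at level 50, left associativity).
Notation "∼ x" := (s_neg _ x) (at level 35, right associativity).
Notation "x ⁎" := (s_star _ x) (at level 30).
Notation "x ≤ y" := (le _ x y) (at level 70).

Lemma eval_subst (A : sigalg) (v : nat -> car A) s f :
  eval A v (subst s f) = eval A (fun n => eval A v (s n)) f.
Proof. induction f; simpl; congruence. Qed.

Lemma eval_ext (A : sigalg) (P : nat -> Prop) v w f :
  vars_in P f -> (forall n, P n -> v n = w n) -> eval A v f = eval A w f.
Proof. induction f; simpl; intros; try tauto; f_equal; try tauto; auto. Qed.

Definition val2 {T} (a b : T) (n : nat) : T := match n with 0 => a | 1 => b | _ => a end.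

Lemma evsub (A : sigalg) v phi psi d :
  vars_in (fun n => n = 0 \/ n = 1) d ->
  eval A v (subst (sub2 phi psi) d) = eval A (val2 (eval A v phi) (eval A v psi)) d.
Proof.
  intro H. rewrite eval_subst. apply (eval_ext A _ _ _ _ H).
  intros n [-> | ->]; reflexivity.
Qed.

Lemma vars_tpow P i n : P n -> vars_in P (tpow i (Var n)).
Proof. induction i; simpl; auto. Qed.

Lemma vars_delta m : vars_in (fun n => n = 0 \/ n = 1) (delta_upto m (Var 0) (Var 1)).
Proof.
  assert (Hi : forall i, vars_in (fun n => n = 0 \/ n = 1) (iff (tpow i (Var 0)) (tpow i (Var 1)))).
  { intro i. unfold iff, imp. simpl.
    assert (H0 := vars_tpow (fun n => n = 0 \/ n = 1) i 0 (or_introl eq_refl)).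
    assert (H1 := vars_tpow (fun n => n = 0 \/ n = 1) i 1 (or_intror eq_refl)).
    tauto. }
  induction m; [apply Hi|]. simpl. split; [exact IHm | apply Hi].
Qed.

Lemma meet_idem {k} (A : Ck_alg k) (x : car A) : x ⊓ x = x.
Proof. pose proof (and_absorb A x (x ⊓ x)) as H. rewrite or_absorb in H. exact H. Qed.
Lemma join_idem {k} (A : Ck_alg k) (x : car A) : x ⊔ x = x.
Proof. pose proof (or_absorb A x (x ⊔ x)) as H. rewrite and_absorb in H. exact H. Qed.
Lemma and_distr_r {k} (A : Ck_alg k) (x y z : car A) : (x ⊔ y) ⊓ z = (x ⊓ z) ⊔ (y ⊓ z).
Proof. rewrite and_comm, and_distr, (and_comm A z x), (and_comm A z y). reflexivity. Qed.
Lemma or_distr {k} (A : Ck_alg k) (x y z : car A) : x ⊔ (y ⊓ z) = (x ⊔ y) ⊓ (x ⊔ z).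
Proof.
  rewrite and_distr_r, and_absorb, and_distr, or_assoc, (and_comm A y x), or_absorb.
  reflexivity.
Qed.
Lemma and_bot {k} (A : Ck_alg k) (x : car A) : x ⊓ s_bot A = s_bot A.
Proof.
  pose proof (and_absorb A (s_bot A) x) as H. rewrite or_comm, or_bot in H.
  rewrite and_comm. exact H.
Qed.
Lemma or_top {k} (A : Ck_alg k) (x : car A) : x ⊔ s_top A = s_top A.
Proof.
  pose proof (or_absorb A (s_top A) x) as H. rewrite and_comm, and_top in H.
  rewrite or_comm. exact H.
Qed.
Lemma le_or {k} (A : Ck_alg k) (x y : car A) : x ≤ y <-> x ⊔ y = y.
Proof.
  unfold le; split; intro H.
  - rewrite <- H, or_comm, and_comm, or_absorb. reflexivity.
  - rewrite <- H, and_absorb. reflexivity.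
Qed.
Lemma le_refl {k} (A : Ck_alg k) (x : car A) : x ≤ x.
Proof. apply meet_idem. Qed.
Lemma le_trans {k} (A : Ck_alg k) (x y z : car A) : x ≤ y -> y ≤ z -> x ≤ z.
Proof. unfold le; intros H1 H2. rewrite <- H1, <- and_assoc, H2. reflexivity. Qed.
Lemma le_antisym {k} (A : Ck_alg k) (x y : car A) : x ≤ y -> y ≤ x -> x = y.
Proof. unfold le; intros H1 H2. transitivity (x ⊓ y); [symmetry; exact H1 | rewrite and_comm; exact H2]. Qed.
Lemma meet_l {k} (A : Ck_alg k) (x y : car A) : x ⊓ y ≤ x.
Proof. unfold le. rewrite (and_comm A x y), <- and_assoc, meet_idem. reflexivity. Qed.
Lemma meet_r {k} (A : Ck_alg k) (x y : car A) : x ⊓ y ≤ y.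
Proof. unfold le. rewrite <- and_assoc, meet_idem. reflexivity. Qed.
Lemma meet_glb {k} (A : Ck_alg k) (x y z : car A) : z ≤ x -> z ≤ y -> z ≤ x ⊓ y.
Proof. unfold le; intros H1 H2. rewrite and_assoc, H1, H2. reflexivity. Qed.
Lemma join_l {k} (A : Ck_alg k) (x y : car A) : x ≤ x ⊔ y.
Proof. apply and_absorb. Qed.
Lemma join_r {k} (A : Ck_alg k) (x y : car A) : y ≤ x ⊔ y.
Proof. rewrite or_comm. apply and_absorb. Qed.
Lemma join_lub {k} (A : Ck_alg k) (x y z : car A) : x ≤ z -> y ≤ z -> x ⊔ y ≤ z.
Proof. rewrite !le_or; intros H1 H2. rewrite <- or_assoc, H2, H1. reflexivity. Qed.
Lemma meet_le_l {k} (A : Ck_alg k) (x y z : car A) : x ≤ z -> x ⊓ y ≤ z.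
Proof. intro H. eapply le_trans; [apply meet_l | exact H]. Qed.
Lemma meet_le_r {k} (A : Ck_alg k) (x y z : car A) : y ≤ z -> x ⊓ y ≤ z.
Proof. intro H. eapply le_trans; [apply meet_r | exact H]. Qed.
Lemma split_l {k} (A : Ck_alg k) (a b c y : car A) :
  a ⊓ c ≤ y -> b ⊓ c ≤ y -> (a ⊔ b) ⊓ c ≤ y.
Proof. intros. rewrite and_distr_r. apply join_lub; auto. Qed.
Lemma split_r {k} (A : Ck_alg k) (a b c y : car A) :
  c ⊓ a ≤ y -> c ⊓ b ≤ y -> c ⊓ (a ⊔ b) ≤ y.
Proof. intros. rewrite and_distr. apply join_lub; auto. Qed.
Lemma le_bot {k} (A : Ck_alg k) (x : car A) : s_bot A ≤ x.
Proof. unfold le. rewrite and_comm. apply and_bot. Qed.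
Lemma le_top {k} (A : Ck_alg k) (x : car A) : x ≤ s_top A.
Proof. apply and_top. Qed.
Lemma le_bot_eq {k} (A : Ck_alg k) (x : car A) : x ≤ s_bot A -> x = s_bot A.
Proof. intro H. apply le_antisym; auto using le_bot. Qed.
Lemma meet_mono {k} (A : Ck_alg k) (a b c d : car A) : a ≤ b -> c ≤ d -> a ⊓ c ≤ b ⊓ d.
Proof. intros. apply meet_glb; [apply meet_le_l | apply meet_le_r]; auto. Qed.

Lemma neg_and {k} (A : Ck_alg k) (x y : car A) : ∼ (x ⊓ y) = ∼ x ⊔ ∼ y.
Proof.
  rewrite <- (neg_invol A (∼ x ⊔ ∼ y)), neg_or, !neg_invol. reflexivity.
Qed.
Lemma neg_anti {k} (A : Ck_alg k) (x y : car A) : x ≤ y -> ∼ y ≤ ∼ x.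
Proof. rewrite le_or; intro H. rewrite <- H, neg_or. apply meet_l. Qed.
Lemma neg_bot {k} (A : Ck_alg k) : ∼ (s_bot A) = s_top A.
Proof.
  apply le_antisym; [apply le_top|].
  rewrite <- (neg_invol A (s_top A)) at 1. apply neg_anti, le_bot.
Qed.
Lemma neg_top {k} (A : Ck_alg k) : ∼ (s_top A) = s_bot A.
Proof. rewrite <- neg_bot, neg_invol. reflexivity. Qed.
Lemma nn_or {k} (A : Ck_alg k) (x y : car A) : ∼ (∼ x ⊔ ∼ y) = x ⊓ y.
Proof. rewrite neg_or, !neg_invol. reflexivity. Qed.
Lemma nn_and {k} (A : Ck_alg k) (x y : car A) : ∼ (∼ x ⊓ ∼ y) = x ⊔ y.
Proof. rewrite neg_and, !neg_invol. reflexivity. Qed.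

Lemma star_meet {k} (A : Ck_alg k) (x : car A) : x ⊓ x ⁎ = s_bot A.
Proof. apply (star_pc A). apply le_refl. Qed.
Lemma star_anti {k} (A : Ck_alg k) (x y : car A) : x ≤ y -> y ⁎ ≤ x ⁎.
Proof.
  intro H. apply (star_pc A). apply le_bot_eq.
  eapply le_trans; [apply meet_mono; [exact H | apply le_refl]|].
  rewrite star_meet. apply le_refl.
Qed.

Lemma L1 {k} (A : Ck_alg k) (w : car A) : ∼ w ⊓ ∼ (w ⁎) ≤ w.
Proof.
  pose proof (neg_anti A _ _ (mpM_ax A w)) as H. rewrite !neg_or, neg_invol in H.
  eapply le_trans; [exact H| apply meet_r].
Qed.


Definition boolE {k} (A : Ck_alg k) (u : car A) := u ⊓ ∼ u = s_bot A.

Lemma bool_join {k} (A : Ck_alg k) u : boolE A u -> u ⊔ ∼ u = s_top A.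
Proof.
  unfold boolE; intro H. rewrite <- (neg_invol A (u ⊔ ∼ u)), neg_or, neg_invol, and_comm, H.
  apply neg_bot.
Qed.
Lemma bool_neg {k} (A : Ck_alg k) u : boolE A u -> boolE A (∼ u).
Proof. unfold boolE; intro H. rewrite neg_invol, and_comm. exact H. Qed.
Lemma bool_and {k} (A : Ck_alg k) u v : boolE A u -> boolE A v -> boolE A (u ⊓ v).
Proof.
  unfold boolE; intros Hu Hv. apply le_bot_eq. rewrite neg_and. apply split_r.
  - rewrite <- Hu. apply meet_mono; [apply meet_l | apply le_refl].
  - rewrite <- Hv. apply meet_mono; [apply meet_r | apply le_refl].
Qed.
Lemma bool_or {k} (A : Ck_alg k) u v : boolE A u -> boolE A v -> boolE A (u ⊔ v).
Proof.
  intros Hu Hv. pose proof (bool_neg A _ (bool_and A _ _ (bool_neg A _ Hu) (bool_neg A _ Hv))) as H.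
  rewrite nn_and in H. exact H.
Qed.
Lemma bool_top {k} (A : Ck_alg k) : boolE A (s_top A).
Proof. unfold boolE. rewrite neg_top, and_comm. apply and_top. Qed.

Definition Nv {k} (A : Ck_alg k) (z : car A) := (∼ z) ⁎ ⊓ z.
Lemma bool_N {k} (A : Ck_alg k) z : boolE A (Nv A z).
Proof.
  unfold boolE, Nv. apply le_bot_eq. rewrite neg_and. apply split_r.
  -
    pose proof (L1 A (∼ z)) as H. rewrite neg_invol in H.
    eapply le_trans with (y := (∼ z) ⁎ ⊓ ∼ z).
    + apply meet_glb.
      * apply meet_le_l, meet_l.
      * eapply le_trans; [|exact H]. apply meet_glb; [apply meet_le_l, meet_r | apply meet_r].
    + rewrite and_comm, star_meet. apply le_refl.
  - rewrite <- (star_meet A (∼ z)), (and_comm A (∼ z)). apply meet_mono; [apply meet_l | apply le_refl].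
Qed.

Definition impv {k} (A : Ck_alg k) (x y : car A) : car A :=
  ∼ ((∼ (x ⊔ y)) ⁎ ⊓ (x ⊔ y)) ⊔ ((∼ (x ⊓ y)) ⁎ ⊓ (x ⊓ y)).
Definition iffv {k} (A : Ck_alg k) (x y : car A) : car A :=
  impv A x y ⊓ impv A (∼ y) (∼ x).

Lemma bool_impv {k} (A : Ck_alg k) x y : boolE A (impv A x y).
Proof. unfold impv. apply bool_or; [apply bool_neg|]; apply bool_N. Qed.
Lemma bool_iffv {k} (A : Ck_alg k) x y : boolE A (iffv A x y).
Proof. unfold iffv. apply bool_and; apply bool_impv. Qed.

Lemma impv_refl {k} (A : Ck_alg k) x : impv A x x = s_top A.
Proof.
  unfold impv. rewrite meet_idem, join_idem, or_comm. apply bool_join, bool_N.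
Qed.
Lemma iffv_refl {k} (A : Ck_alg k) x : iffv A x x = s_top A.
Proof. unfold iffv. rewrite !impv_refl. apply and_top. Qed.
Lemma iffv_comm {k} (A : Ck_alg k) x y : iffv A x y = iffv A y x.
Proof.
  unfold iffv, impv. rewrite (or_comm A x y), (and_comm A x y), (or_comm A (∼ y) (∼ x)),
    (and_comm A (∼ y) (∼ x)). reflexivity.
Qed.

Lemma split_mid {k} (A : Ck_alg k) (a b b' c y : car A) :
  a ⊓ (b ⊓ c) ≤ y -> a ⊓ (b' ⊓ c) ≤ y -> a ⊓ ((b ⊔ b') ⊓ c) ≤ y.
Proof. intros. rewrite and_distr_r. apply split_r; auto. Qed.

Lemma key_abs {k} (A : Ck_alg k) (P1 P2 P3 Q1 Q2 Q3 x y : car A) :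
  P3 ≤ y -> Q2 ≤ y -> Q3 ⊓ x ≤ y -> P2 ⊓ Q1 ≤ y -> P1 ⊓ x ≤ P2 ->
  ((P1 ⊔ P2) ⊔ P3) ⊓ ((Q1 ⊔ Q2) ⊔ Q3) ⊓ x ≤ y.
Proof.
  intros h3 hq2 hq3 h21 h1. rewrite <- and_assoc.
  assert (G3 : forall a, a ⊓ (Q3 ⊓ x) ≤ y) by (intro; apply meet_le_r; exact hq3).
  assert (G2 : forall a, a ⊓ (Q2 ⊓ x) ≤ y) by (intro; apply meet_le_r, meet_le_l; exact hq2).
  assert (G21 : P2 ⊓ (Q1 ⊓ x) ≤ y).
  { eapply le_trans; [|exact h21]. apply meet_mono; [apply le_refl | apply meet_l]. }
  apply split_l; [apply split_l|].
  - apply split_mid; [apply split_mid|]; auto.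
    eapply le_trans; [|exact G21]. apply meet_glb.
    + eapply le_trans; [|exact h1]. apply meet_glb; [apply meet_l | apply meet_le_r, meet_r].
    + apply meet_r.
  - apply split_mid; [apply split_mid|]; auto.
  - apply meet_le_l. exact h3.
Qed.

Lemma iffv_key {k} (A : Ck_alg k) (x y : car A) : iffv A x y ⊓ x ≤ y.
Proof.
  unfold iffv, impv. rewrite !neg_and, !nn_or. rewrite !neg_invol. refine (key_abs A _ _ _ _ _ _ x y _ _ _ _ _).
  - apply meet_le_r, meet_r.
  - apply meet_l.
  - apply le_trans with (y := s_bot A); [|apply le_bot].
    rewrite <- (star_meet A (y ⊔ x)), (and_comm A (y ⊔ x)).
    apply meet_mono; [apply meet_l | apply join_r].
  - eapply le_trans; [|apply (meet_l A y x)]. eapply le_trans; [|apply (L1 A (y ⊓ x))].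
    apply meet_mono; [|apply le_refl]. apply neg_anti.
    eapply le_trans; [apply meet_l|]. apply join_r.
  - pose proof (L1 A (∼ (x ⊔ y))) as H. rewrite neg_invol in H.
    eapply le_trans; [|exact H]. rewrite and_comm. apply meet_mono; [apply join_l | apply le_refl].
Qed.


Definition eqv {k} (A : Ck_alg k) (u a b : car A) := a ⊓ u = b ⊓ u.

Lemma meet_dist_u {k} (A : Ck_alg k) (a c u : car A) : (a ⊓ c) ⊓ u = (a ⊓ u) ⊓ (c ⊓ u).
Proof.
  rewrite (and_assoc A (a ⊓ u)), <- (and_assoc A a u c), (and_comm A u c), and_assoc,
    <- (and_assoc A (a ⊓ c) u u), meet_idem. reflexivity.
Qed.
Lemma eqv_and {k} (A : Ck_alg k) u a b c d : eqv A u a b -> eqv A u c d -> eqv A u (a ⊓ c) (b ⊓ d).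
Proof. unfold eqv; intros H1 H2. rewrite (meet_dist_u A a c u), (meet_dist_u A b d u), H1, H2. reflexivity. Qed.
Lemma eqv_or {k} (A : Ck_alg k) u a b c d : eqv A u a b -> eqv A u c d -> eqv A u (a ⊔ c) (b ⊔ d).
Proof. unfold eqv; intros H1 H2. rewrite !and_distr_r, H1, H2. reflexivity. Qed.
Lemma neg_u {k} (A : Ck_alg k) u a : boolE A u -> ∼ a ⊓ u = ∼ (a ⊓ u) ⊓ u.
Proof.
  intro H. rewrite neg_and, and_distr_r, (and_comm A (∼ u) u). unfold boolE in H. rewrite H, or_bot.
  reflexivity.
Qed.
Lemma eqv_neg {k} (A : Ck_alg k) u a b : boolE A u -> eqv A u a b -> eqv A u (∼ a) (∼ b).
Proof. unfold eqv; intros Hu H. rewrite (neg_u A u a Hu), (neg_u A u b Hu), H. reflexivity. Qed.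
Lemma star_u {k} (A : Ck_alg k) (u a : car A) : a ⁎ ⊓ u = (a ⊓ u) ⁎ ⊓ u.
Proof.
  apply le_antisym.
  - apply meet_mono; [apply star_anti, meet_l | apply le_refl].
  - apply meet_glb; [|apply meet_r].
    apply (star_pc A). apply le_bot_eq.
    rewrite <- (star_meet A (a ⊓ u)). apply meet_glb.
    + apply meet_glb; [apply meet_l | apply meet_le_r, meet_r].
    + apply meet_le_r, meet_l.
Qed.
Lemma eqv_star {k} (A : Ck_alg k) u a b : eqv A u a b -> eqv A u (a ⁎) (b ⁎).
Proof. unfold eqv; intros H. rewrite (star_u A u a), (star_u A u b), H. reflexivity. Qed.

Lemma eqv_impv {k} (A : Ck_alg k) u a b c d : boolE A u -> eqv A u a b -> eqv A u c d ->
  eqv A u (impv A a c) (impv A b d).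
Proof.
  intros Hu H1 H2. unfold impv.
  assert (Ho := eqv_or A u _ _ _ _ H1 H2). assert (Ha := eqv_and A u _ _ _ _ H1 H2).
  apply eqv_or; [apply eqv_neg; auto|]; apply eqv_and; auto; apply eqv_star, eqv_neg; auto.
Qed.
Lemma eqv_iffv {k} (A : Ck_alg k) u a b c d : boolE A u -> eqv A u a b -> eqv A u c d ->
  eqv A u (iffv A a c) (iffv A b d).
Proof.
  intros Hu H1 H2. unfold iffv. apply eqv_and; apply eqv_impv; auto; apply eqv_neg; auto.
Qed.
Lemma bool_le_iff {k} (A : Ck_alg k) u a b : boolE A u -> eqv A u a b -> u ≤ iffv A a b.
Proof.
  intros Hu H. assert (E := eqv_iffv A u a a a b Hu (eq_refl _) H). unfold eqv in E.
  rewrite iffv_refl in E. unfold le. rewrite and_comm, <- E, and_comm. apply and_top.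
Qed.
Lemma le_iff_eqv {k} (A : Ck_alg k) u a b : u ≤ iffv A a b -> eqv A u a b.
Proof.
  unfold le, eqv. intro H. set (B := iffv A a b) in *.
  assert (Ka : B ⊓ a ≤ b) by apply iffv_key.
  assert (Kb : B ⊓ b ≤ a) by (unfold B; rewrite iffv_comm; apply iffv_key).
  assert (E : B ⊓ a = B ⊓ b).
  { apply le_antisym; apply meet_glb; try apply meet_l; auto. }
  assert (X : forall c, c ⊓ u = u ⊓ (B ⊓ c)).
  { intro c. rewrite <- H at 1. rewrite (and_comm A c (u ⊓ B)), and_assoc. reflexivity. }
  rewrite (X a), (X b), E. reflexivity.
Qed.

Definition ti {k} (A : Ck_alg k) (i : nat) (a : car A) : car A := Nat.iter i (s_t A) a.
Lemma ti_and {k} (A : Ck_alg k) i a b : ti A i (a ⊓ b) = ti A i a ⊓ ti A i b.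
Proof. induction i; simpl; auto. unfold ti in *; simpl. rewrite IHi, t_and. reflexivity. Qed.
Lemma ti_or {k} (A : Ck_alg k) i a b : ti A i (a ⊔ b) = ti A i a ⊔ ti A i b.
Proof. induction i; simpl; auto. unfold ti in *; simpl. rewrite IHi, t_or. reflexivity. Qed.
Lemma ti_neg {k} (A : Ck_alg k) i a : ti A i (∼ a) = ∼ ti A i a.
Proof. induction i; simpl; auto. unfold ti in *; simpl. rewrite IHi, t_neg. reflexivity. Qed.
Lemma ti_star {k} (A : Ck_alg k) i a : ti A i (a ⁎) = (ti A i a) ⁎.
Proof. induction i; simpl; auto. unfold ti in *; simpl. rewrite IHi, t_star. reflexivity. Qed.
Lemma ti_S {k} (A : Ck_alg k) i a : ti A i (s_t A a) = ti A (S i) a.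
Proof. induction i; simpl; auto. unfold ti in *; simpl in *. rewrite IHi. reflexivity. Qed.

Fixpoint deltav {k} (A : Ck_alg k) (m : nat) (a b : car A) : car A :=
  match m with
  | 0 => iffv A (ti A 0 a) (ti A 0 b)
  | S m' => deltav A m' a b ⊓ iffv A (ti A (S m') a) (ti A (S m') b)
  end.

Lemma eval_tpow (A : sigalg) v i x : eval A v (tpow i x) = Nat.iter i (s_t A) (eval A v x).
Proof. induction i; simpl; auto. rewrite IHi. reflexivity. Qed.

Lemma eval_delta {k} (A : Ck_alg k) v m p q :
  eval A v (delta_upto m p q) = deltav A m (eval A v p) (eval A v q).
Proof.
  induction m; simpl.
  - reflexivity.
  - rewrite IHm. f_equal. unfold iff, imp. simpl. rewrite !eval_tpow. reflexivity.
Qed.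

Lemma deltav_le {k} (A : Ck_alg k) m a b i : i <= m -> deltav A m a b ≤ iffv A (ti A i a) (ti A i b).
Proof.
  induction m; intro H.
  - assert (i = 0) by lia. subst. apply le_refl.
  - simpl. destruct (Nat.eq_dec i (S m)) as [->|Hne].
    + apply meet_r.
    + apply meet_le_l, IHm. lia.
Qed.
Lemma deltav_ge {k} (A : Ck_alg k) m a b u :
  (forall i, i <= m -> u ≤ iffv A (ti A i a) (ti A i b)) -> u ≤ deltav A m a b.
Proof.
  induction m; intro H; simpl.
  - exact (H 0 (le_n 0)).
  - apply meet_glb; [apply IHm; intros; apply H; lia | exact (H (S m) (le_n _))].
Qed.
Lemma bool_deltav {k} (A : Ck_alg k) m a b : boolE A (deltav A m a b).
Proof. induction m; simpl; [apply bool_iffv | apply bool_and; auto; apply bool_iffv]. Qed.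
Lemma deltav_refl {k} (A : Ck_alg k) m a : deltav A m a a = s_top A.
Proof. induction m; simpl; rewrite ?IHm, iffv_refl; auto. apply and_top. Qed.

Lemma sem_E2 {k} (A : Ck_alg k) m (x a b : car A) : x ≤ deltav A m a b -> x ≤ a -> x ≤ b.
Proof.
  intros H1 H2. eapply le_trans; [|apply (iffv_key A a b)].
  apply meet_glb; auto. eapply le_trans; [exact H1|]. apply (deltav_le A m a b 0). lia.
Qed.

Lemma sem_bin {k} (A : Ck_alg k) m (x a b c d : car A) (op : car A -> car A -> car A)
  (Hop : forall u a b c d, boolE A u -> eqv A u a b -> eqv A u c d -> eqv A u (op a c) (op b d))
  (Hti : forall i a c, ti A i (op a c) = op (ti A i a) (ti A i c)) :
  x ≤ deltav A m a b -> x ≤ deltav A m c d -> x ≤ deltav A m (op a c) (op b d).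
Proof.
  intros H1 H2. set (u := deltav A m a b ⊓ deltav A m c d).
  assert (Hu : boolE A u) by (apply bool_and; apply bool_deltav).
  apply le_trans with (y := u); [apply meet_glb; auto|].
  apply deltav_ge. intros i Hi. rewrite !Hti. apply bool_le_iff; auto.
  apply Hop; auto; apply le_iff_eqv.
  - eapply le_trans; [apply meet_l|]. apply deltav_le; auto.
  - eapply le_trans; [apply meet_r|]. apply deltav_le; auto.
Qed.

Lemma sem_un {k} (A : Ck_alg k) m (x a b : car A) (op : car A -> car A)
  (Hop : forall u a b, boolE A u -> eqv A u a b -> eqv A u (op a) (op b))
  (Hti : forall i a, ti A i (op a) = op (ti A i a)) :
  x ≤ deltav A m a b -> x ≤ deltav A m (op a) (op b).
Proof.
  intros H1. set (u := deltav A m a b).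
  assert (Hu : boolE A u) by apply bool_deltav.
  apply le_trans with (y := u); auto.
  apply deltav_ge. intros i Hi. rewrite !Hti. apply bool_le_iff; auto.
  apply Hop; auto; apply le_iff_eqv. apply deltav_le; auto.
Qed.

Lemma sem_t {k} (A : Ck_alg k) (hk : 1 <= k) (x a b : car A) :
  x ≤ deltav A (k - 1) a b -> x ≤ deltav A (k - 1) (s_t A a) (s_t A b).
Proof.
  intro H. eapply le_trans; [exact H|]. apply deltav_ge. intros i Hi. rewrite !ti_S.
  destruct (Nat.eq_dec (S i) k) as [E|E].
  - rewrite E. unfold ti. rewrite !t_period. apply (deltav_le A (k-1) a b 0). lia.
  - apply deltav_le. lia.
Qed.


Lemma ev_delta {k} (A : Ck_alg k) v phi psi :
  eval A v (subst (sub2 phi psi) (delta k)) = deltav A (k - 1) (eval A v phi) (eval A v psi).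
Proof. rewrite evsub by apply vars_delta. unfold delta. rewrite eval_delta. reflexivity. Qed.

Lemma eqset k (hk : 1 <= k) (E : Fm -> Prop) (HE : forall a, E a <-> a = delta k) :
  equivalence_set (Lk k) E.
Proof.
  assert (Hin : forall phi psi c, inst2 E phi psi c -> c = subst (sub2 phi psi) (delta k)).
  { intros phi psi c [d [Hd ->]]. apply HE in Hd. subst. reflexivity. }
  assert (Hmk : forall phi psi, inst2 E phi psi (subst (sub2 phi psi) (delta k))).
  { intros. exists (delta k). split; [apply HE|]; reflexivity. }
  assert (Valid : forall phi, cons_all (Lk k) no_prem (inst2 E phi phi)).
  { intros phi c Hc. apply Hin in Hc. subst. left. split; [intros b Hb; exact Hb|].
    intros A v. rewrite ev_delta. apply deltav_refl. }
  assert (Un : forall (c : Fm -> Fm) (f : forall A : Ck_alg k, car A -> car A),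
    (forall (A : Ck_alg k) v n, eval A v (c (Var n)) = f A (v n)) ->
    (forall (A : Ck_alg k) (x a b : car A), x ≤ deltav A (k-1) a b ->
        x ≤ deltav A (k-1) (f A a) (f A b)) ->
    cons_all (Lk k) (inst2 E (Var 0) (Var 1)) (inst2 E (c (Var 0)) (c (Var 1)))).
  { intros c f Hev Hs g Hg. apply Hin in Hg. subst. right.
    exists [subst (sub2 (Var 0) (Var 1)) (delta k)]. split; [discriminate|]. split.
    - intros b [<-|[]]. apply Hmk.
    - intros A v x Hx. specialize (Hx _ (or_introl eq_refl)). rewrite ev_delta in *.
      rewrite !Hev. apply Hs. exact Hx. }
  assert (Bin : forall (c : Fm -> Fm -> Fm) (f : forall A : Ck_alg k, car A -> car A -> car A),
    (forall (A : Ck_alg k) v n m, eval A v (c (Var n) (Var m)) = f A (v n) (v m)) ->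
    (forall (A : Ck_alg k) (x a b a' b' : car A), x ≤ deltav A (k-1) a b ->
        x ≤ deltav A (k-1) a' b' -> x ≤ deltav A (k-1) (f A a a') (f A b b')) ->
    cons_all (Lk k) (union (inst2 E (Var 0) (Var 1)) (inst2 E (Var 2) (Var 3)))
      (inst2 E (c (Var 0) (Var 2)) (c (Var 1) (Var 3)))).
  { intros c f Hev Hs g Hg. apply Hin in Hg. subst. right.
    exists [subst (sub2 (Var 0) (Var 1)) (delta k); subst (sub2 (Var 2) (Var 3)) (delta k)].
    split; [discriminate|]. split.
    - intros b [<-|[<-|[]]]; [left|right]; apply Hmk.
    - intros A v x Hx. assert (H1 := Hx _ (or_introl eq_refl)).
      assert (H2 := Hx _ (or_intror (or_introl eq_refl))). rewrite ev_delta in *.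
      rewrite !Hev. apply Hs; assumption. }
  unfold equivalence_set. repeat split.
  - intros d Hd. apply HE in Hd. subst. apply vars_delta.
  - apply Valid.
  - right. exists [subst (sub2 (Var 0) (Var 1)) (delta k); Var 0].
    split; [discriminate|]. split.
    + intros b [<-|[<-|[]]]; [left; apply Hmk | right; reflexivity].
    + intros A v x Hx. assert (H1 := Hx _ (or_introl eq_refl)).
      assert (H2 := Hx _ (or_intror (or_introl eq_refl))). rewrite ev_delta in H1.
      simpl in *. eapply sem_E2; eassumption.
  - apply (Bin And (fun A a b => a ⊓ b)); [reflexivity|].
    intros. apply (sem_bin A); auto. intros; apply eqv_and; assumption. intros; apply ti_and.
  - apply (Bin Or (fun A a b => a ⊔ b)); [reflexivity|].
    intros. apply (sem_bin A); auto. intros; apply eqv_or; assumption. intros; apply ti_or.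
  - apply (Un Neg (fun A a => ∼ a)); [reflexivity|].
    intros. apply (sem_un A); auto. intros; apply eqv_neg; auto. intros; apply ti_neg.
  - apply (Un Star (fun A a => a ⁎)); [reflexivity|].
    intros. apply (sem_un A); auto. intros; apply eqv_star; auto. intros; apply ti_star.
  - apply (Un Tc (fun A a => s_t A a)); [reflexivity|].
    intros. apply (sem_t A hk); auto.
  - apply Valid.
  - apply Valid.
Qed.


Definition vals4 {T} (a b c d : T) (n : nat) : T :=
  match n with 0 => a | 1 => b | 2 => c | _ => d end.

Lemma cong_term (A : sigalg) th : congruence A th ->
  forall f v w, (forall n, th (v n) (w n)) -> th (eval A v f) (eval A w f).
Proof.
  intros [Hr [Hs [Ht [Ha [Ho [Hn [Hst Htt]]]]]]] f v w H.
  induction f; simpl; auto.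
Qed.

Lemma proto_of (L : logic) d0 (H2 : vars_in (fun n => n = 0 \/ n = 1) d0)
  (HE : equivalence_set L (fun a => a = d0)) : protoalgebraic L.
Proof.
  destruct HE as [_ [E1 [E2 [Eand [Eor [Eneg [Est [Et [Etop Ebot]]]]]]]]].
  intros A F G HF HG FG x y [th [Hc [Hcomp Hxy]]].
  assert (mk : forall phi psi, inst2 (fun a => a = d0) phi psi (subst (sub2 phi psi) d0)).
  { intros. exists d0. split; reflexivity. }
  assert (ev : forall v phi psi, eval A v (subst (sub2 phi psi) d0) =
      eval A (val2 (eval A v phi) (eval A v psi)) d0).
  { intros. apply evsub, H2. }
  assert (inv : forall phi psi c, inst2 (fun a => a = d0) phi psi c -> c = subst (sub2 phi psi) d0).
  { intros phi psi c [d [-> ->]]. reflexivity. }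
  assert (Rrefl : forall Phi, is_filter L A Phi -> forall a, Phi (eval A (val2 a a) d0)).
  { intros Phi HPhi a. pose proof (HPhi _ _ (E1 _ (mk (Var 0) (Var 0))) (fun _ => a)) as H.
    rewrite ev in H. apply H. intros b []. }
  set (R := fun a b => G (eval A (val2 a b) d0)).
  assert (compat : forall a b, R a b -> G a -> G b).
  { intros a b Hab Ga. apply (HG _ _ E2 (val2 a b)).
    intros c [Hc'|Hc']; [apply inv in Hc'; subst; rewrite ev; exact Hab | subst; exact Ga]. }
  assert (rep : forall f v w, (forall n, R (v n) (w n)) -> R (eval A v f) (eval A w f)).
  { intros f v w Hvw. induction f; simpl.
    - apply Hvw.
    - pose proof (HG _ _ (Eand _ (mk _ _)) (vals4 (eval A v f1) (eval A w f1) (eval A v f2) (eval A w f2))) as H.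
      rewrite ev in H. apply H.
      intros c [Hc'|Hc']; apply inv in Hc'; subst; rewrite ev; simpl; assumption.
    - pose proof (HG _ _ (Eor _ (mk _ _)) (vals4 (eval A v f1) (eval A w f1) (eval A v f2) (eval A w f2))) as H.
      rewrite ev in H. apply H.
      intros c [Hc'|Hc']; apply inv in Hc'; subst; rewrite ev; simpl; assumption.
    - pose proof (HG _ _ (Eneg _ (mk _ _)) (vals4 (eval A v f) (eval A w f) (eval A v f) (eval A v f))) as H.
      rewrite ev in H. apply H.
      intros c Hc'; apply inv in Hc'; subst; rewrite ev; simpl; assumption.
    - pose proof (HG _ _ (Est _ (mk _ _)) (vals4 (eval A v f) (eval A w f) (eval A v f) (eval A v f))) as H.
      rewrite ev in H. apply H.
      intros c Hc'; apply inv in Hc'; subst; rewrite ev; simpl; assumption.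
    - pose proof (HG _ _ (Et _ (mk _ _)) (vals4 (eval A v f) (eval A w f) (eval A v f) (eval A v f))) as H.
      rewrite ev in H. apply H.
      intros c Hc'; apply inv in Hc'; subst; rewrite ev; simpl; assumption.
    - pose proof (HG _ _ (Etop _ (mk _ _)) (fun _ => s_top A)) as H.
      rewrite ev in H. apply H. intros b [].
    - pose proof (HG _ _ (Ebot _ (mk _ _)) (fun _ => s_bot A)) as H.
      rewrite ev in H. apply H. intros b []. }
  assert (Rr : forall a, R a a) by (intro a; exact (Rrefl G HG a)).
  assert (Rs : forall a b, R a b -> R b a).
  { intros a b Hab.
    pose proof (rep (subst (sub2 (Var 0) (Var 2)) d0) (fun _ => a) (vals4 b a a a)) as H.
    assert (Hv : forall n, R ((fun _ => a) n) (vals4 b a a a n)).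
    { intros [|[|[|n]]]; simpl; [exact Hab | apply Rr..]. }
    specialize (H Hv). rewrite !ev in H. simpl in H.
    apply (compat _ _ H). apply Rr. }
  assert (Rt : forall a b c, R a b -> R b c -> R a c).
  { intros a b c Hab Hbc.
    pose proof (rep (subst (sub2 (Var 0) (Var 2)) d0) (vals4 b c c c) (vals4 a c c c)) as H.
    assert (Hv : forall n, R (vals4 b c c c n) (vals4 a c c c n)).
    { intros [|[|[|n]]]; simpl; [exact (Rs _ _ Hab) | apply Rr..]. }
    specialize (H Hv). rewrite !ev in H. simpl in H.
    apply (compat _ _ H). exact Hbc. }
  exists R. split; [|split].
  - repeat split; auto.
    + intros a a' b b' H1 H3. apply (rep (And (Var 0) (Var 1)) (vals4 a b a a) (vals4 a' b' a a)).
      intros [|[|[|n]]]; simpl; first [assumption | apply Rr].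
    + intros a a' b b' H1 H3. apply (rep (Or (Var 0) (Var 1)) (vals4 a b a a) (vals4 a' b' a a)).
      intros [|[|[|n]]]; simpl; first [assumption | apply Rr].
    + intros a a' H1. apply (rep (Neg (Var 0)) (vals4 a a a a) (vals4 a' a a a)).
      intros [|[|[|n]]]; simpl; first [assumption | apply Rr].
    + intros a a' H1. apply (rep (Star (Var 0)) (vals4 a a a a) (vals4 a' a a a)).
      intros [|[|[|n]]]; simpl; first [assumption | apply Rr].
    + intros a a' H1. apply (rep (Tc (Var 0)) (vals4 a a a a) (vals4 a' a a a)).
      intros [|[|[|n]]]; simpl; first [assumption | apply Rr].
  - intros a b Hab Ga. exact (compat a b Hab Ga).
  - unfold R. apply FG.
    pose proof (cong_term A th Hc d0 (val2 x x) (val2 x y)) as H.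
    assert (Hv : forall n, th (val2 x x n) (val2 x y n)).
    { destruct Hc as [Hr _]. intros [|[|n]]; simpl; auto. }
    apply (Hcomp _ _ (H Hv)). apply Rrefl, HF.
Qed.


Inductive T3 := Z3 | H3 | O3.
Definition and3 (x y : T3) : T3 :=
  match x, y with
  | Z3, _ | _, Z3 => Z3
  | H3, _ | _, H3 => H3
  | O3, O3 => O3 end.
Definition or3 (x y : T3) : T3 :=
  match x, y with
  | O3, _ | _, O3 => O3
  | H3, _ | _, H3 => H3
  | Z3, Z3 => Z3 end.
Definition neg3 (x : T3) : T3 := match x with Z3 => O3 | H3 => H3 | O3 => Z3 end.
Definition star3 (x : T3) : T3 := match x with Z3 => O3 | _ => Z3 end.
Definition T3_eq (a b : T3) : {a = b} + {a <> b}.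
Proof. decide equality. Defined.
Definition A3s : sigalg := SigAlg T3 and3 or3 neg3 star3 (fun x => x) O3 Z3.

Definition A3 (k : nat) : Ck_alg k.
Proof.
  apply (CkAlg k A3s); unfold le; simpl;
    try (intros; repeat match goal with x : T3 |- _ => destruct x end; simpl; try tauto;
         split; intro; try reflexivity; discriminate).
  - intros y. exists y. reflexivity.
  - intros x. induction k; simpl; auto.
Defined.

Lemma filter_A3 k (F : T3 -> Prop) (Htop : F O3)
  (Hand : forall x y, F x -> F y -> F (and3 x y))
  (Hup : forall x y, and3 x y = x -> F x -> F y) : is_filter (Lk k) (ck (A3 k)) F.
Proof.
  intros G a HL v HG. destruct HL as [[_ Hv] | [l [_ [Hl He]]]].
  - rewrite (Hv (A3 k) v). exact Htop.
  - set (x := fold_right (fun b acc => and3 (eval (A3 k) v b) acc) O3 l).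
    assert (Hx1 : forall b, In b l -> and3 x (eval (A3 k) v b) = x).
    { unfold x. clear -l. induction l as [|c l IH]; intros b Hb; [destruct Hb|].
      destruct Hb as [<-|Hb].
      - exact (meet_l (A3 k) _ _).
      - exact (meet_le_r (A3 k) _ _ _ (IH b Hb)). }
    assert (Hx2 : F x).
    { unfold x. clear Hx1 x He. induction l as [|c l IH]; simpl; [exact Htop|].
      apply Hand; [apply HG, Hl; left; reflexivity | apply IH; intros; apply Hl; right; auto]. }
    apply (Hup x); [|exact Hx2]. apply (He (A3 k) v x). exact Hx1.
Qed.

Lemma not_alg k : ~ algebraizable (Lk k).
Proof.
  intros [D [E [H2 [HEv [HR [HS [HT [Hand [Hor [Hneg [Hst [Ht [Htop [Hbot H4]]]]]]]]]]]]]].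
  cbv zeta in H4. destruct H4 as [H4a H4b].
  set (AA := A3 k).
  set (Fh := fun x : T3 => x = H3 \/ x = O3).
  set (F1 := fun x : T3 => x = O3).
  assert (fh : is_filter (Lk k) (ck AA) Fh).
  { apply filter_A3; unfold Fh.
    - right; reflexivity.
    - intros [] [] [] []; simpl; try discriminate; auto.
    - intros [] [] Hxy []; simpl in *; try discriminate; auto. }
  assert (f1 : is_filter (Lk k) (ck AA) F1).
  { apply filter_A3; unfold F1.
    - reflexivity.
    - intros [] [] ? ?; simpl; try discriminate; auto.
    - intros [] [] Hxy ?; simpl in *; try discriminate; auto. }
  set (th := fun (F : T3 -> Prop) (a b : T3) => forall d, D d -> F (eval AA (val2 a b) d)).
  assert (ev : forall v phi psi d, D d -> eval AA v (subst (sub2 phi psi) d) =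
      eval AA (val2 (eval AA v phi) (eval AA v psi)) d).
  { intros. apply evsub, H2. assumption. }
  assert (mk : forall phi psi d, D d -> inst2 D phi psi (subst (sub2 phi psi) d)).
  { intros. exists d. auto. }
  assert (threfl : forall F, is_filter (Lk k) (ck AA) F -> forall a, th F a a).
  { intros F HF a d Hd. pose proof (HF _ _ (HR _ (mk (Var 0) (Var 0) d Hd)) (fun _ => a)) as H.
    rewrite ev in H by exact Hd. apply H. intros b []. }
  assert (thsym : forall F, is_filter (Lk k) (ck AA) F -> forall a b, th F a b -> th F b a).
  { intros F HF a b Hab d Hd. pose proof (HF _ _ (HS _ (mk (Var 1) (Var 0) d Hd)) (val2 a b)) as H.
    rewrite ev in H by exact Hd. apply H. intros c [d' [Hd' ->]]. rewrite ev by exact Hd'.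
    apply Hab, Hd'. }
  assert (thtr : forall F, is_filter (Lk k) (ck AA) F -> forall a b c, th F a b -> th F b c -> th F a c).
  { intros F HF a b c Hab Hbc d Hd.
    pose proof (HF _ _ (HT _ (mk (Var 0) (Var 2) d Hd)) (vals4 a b c c)) as H.
    rewrite ev in H by exact Hd. apply H. intros e [[d' [Hd' ->]]|[d' [Hd' ->]]];
      rewrite ev by exact Hd'; [apply Hab | apply Hbc]; exact Hd'. }
  assert (thneg : forall F, is_filter (Lk k) (ck AA) F -> forall a b, th F a b -> th F (neg3 a) (neg3 b)).
  { intros F HF a b Hab d Hd.
    pose proof (HF _ _ (Hneg _ (mk (Neg (Var 0)) (Neg (Var 1)) d Hd)) (val2 a b)) as H.
    rewrite ev in H by exact Hd. apply H. intros c [d' [Hd' ->]]. rewrite ev by exact Hd'.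
    apply Hab, Hd'. }
  assert (thand : forall F, is_filter (Lk k) (ck AA) F -> forall a b c d, th F a b -> th F c d ->
      th F (and3 a c) (and3 b d)).
  { intros F HF a b c d Hab Hcd e He.
    pose proof (HF _ _ (Hand _ (mk (And (Var 0) (Var 2)) (And (Var 1) (Var 3)) e He)) (vals4 a b c d)) as H.
    rewrite ev in H by exact He. apply H. intros g [[d' [Hd' ->]]|[d' [Hd' ->]]];
      rewrite ev by exact Hd'; [apply Hab | apply Hcd]; exact Hd'. }
  (* total theta gives bottom in the filter *)
  assert (nototal : forall F, is_filter (Lk k) (ck AA) F -> ~ F Z3 -> ~ (forall a b, th F a b)).
  { intros F HF nF Htot. apply nF.
    pose proof (HF _ _ H4b (fun _ => Z3)) as H. apply H.
    intros c [e [d [He [Hd ->]]]]. rewrite ev by exact Hd. apply Htot, Hd. }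
  assert (dich : forall a b, th Fh a b -> a = b).
  { intros a b Hab. destruct (T3_eq a b) as [Eq|Eq]; [exact Eq|]. exfalso.
    apply (nototal Fh fh); [unfold Fh; intros [H|H]; discriminate|].
    assert (Pzh : th Fh Z3 H3 /\ th Fh H3 O3).
    { assert (G1 : th Fh Z3 H3 -> th Fh Z3 H3 /\ th Fh H3 O3).
      { intro Hzh. split; [exact Hzh|]. apply thsym; auto. exact (thneg Fh fh _ _ Hzh). }
      assert (G2 : th Fh H3 O3 -> th Fh Z3 H3 /\ th Fh H3 O3).
      { intro Hho. split; [|exact Hho]. apply thsym; auto. exact (thneg Fh fh _ _ Hho). }
      destruct a, b; try (exfalso; apply Eq; reflexivity).
      - apply G1, Hab.
      - apply G1. exact (thand Fh fh _ _ _ _ Hab (threfl Fh fh H3)).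
      - apply G1, thsym; auto.
      - apply G2, Hab.
      - apply G1. exact (thand Fh fh _ _ _ _ (thsym Fh fh _ _ Hab) (threfl Fh fh H3)).
      - apply G2, thsym; auto. }
    destruct Pzh as [Pzh Pho].
    intros [] []; try apply threfl; auto; try (apply thsym; auto);
      try (eapply thtr; eauto); try (apply thsym; auto; eapply thtr; eauto). }
  pose (v := fun _ : nat => H3).
  assert (Hall : forall c, (exists e d, E e /\ D d /\ c = subst (sub2 (fst e) (snd e)) d) ->
       F1 (eval AA v c)).
  { intros c [e [d [He [Hd ->]]]].
    assert (Hth : th Fh (eval AA v (fst e)) (eval AA v (snd e))).
    { intros d' Hd'. pose proof (fh _ _ (H4a _ (ex_intro _ e (ex_intro _ d' (conj He (conj Hd' eq_refl))))) v) as H.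
      rewrite ev in H by exact Hd'. apply H. intros b ->. unfold Fh. left; reflexivity. }
    apply dich in Hth. rewrite ev by exact Hd. rewrite Hth. apply threfl; auto. }
  pose proof (f1 _ _ H4b v Hall) as H. unfold F1 in H. simpl in H. discriminate.
Qed.


Theorem theorem6p12 (k : nat) (hk : 1 <= k) :
  equivalence_set (Lk k) (fun a => a = delta k) /\
  finitely_equivalential (Lk k) /\
  protoalgebraic (Lk k) /\
  ~ algebraizable (Lk k).
Proof.
  assert (Hq : equivalence_set (Lk k) (fun a => a = delta k)) by (apply eqset; auto; tauto).
  split; [exact Hq|]. split; [|split].
  - exists [delta k]. apply eqset; auto. intro a. simpl. split; [intros [H|[]]; auto | intros ->; left; reflexivity].
  - apply (proto_of _ (delta k)); [apply vars_delta | exact Hq].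
  - apply not_alg.
Qed.
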